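(* Consider the local time-stepping Adams–Bashforth scheme of order $k$ described in the context, applied to $\frac{d\mathbf{y}}{dt}=\mathbf{D}(\mathbf{y})$. Let $\mathbf{c}\in\mathbb{R}^N$ satisfy $\mathbf{c}\cdot\mathbf{D}(\mathbf{y})=0$ for all $\mathbf{y}\in\mathbb{R}^N$ (a linear conserved quantity $C=\mathbf{c}\cdot\mathbf{y}$). Then $\mathbf{c}\cdot\Delta\tilde{\mathbf{y}}_n=0$ for every step index $n$. Consequently, writing $\mathbf{c}=(\mathbf{c}^1,\ldots,\mathbf{c}^S)$ according to the partition of the components, if $n_1<n_2$ are indices such that $\tilde t_{n_1}$ and $\tilde t_{n_2}$ are evaluation times of every set, i.e. $\tilde t_{n_1}=t^s_{p_s}$ and $\tilde t_{n_2}=t^s_{r_s}$ for all $s$, then $\sum_{s=1}^S \mathbf{c}^s\cdot\mathbf{y}^s_{r_s}=\sum_{s=1}^S\mathbf{c}^s\cdot\mathbf{y}^s_{p_s}$ exactly.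
   Context: We solve an autonomous system $\frac{d\mathbf{y}}{dt}=\mathbf{D}(\mathbf{y})$, $\mathbf{y}\in\mathbb{R}^N$, $\mathbf{D}:\mathbb{R}^N\to\mathbb{R}^N$. The components of $\mathbf{y}$ are partitioned into $S$ sets, $\mathbf{y}=(\mathbf{y}^1,\ldots,\mathbf{y}^S)$, and $\mathbf{D}^s$ denotes the components of $\mathbf{D}$ belonging to set $s$. Set $s$ is evaluated at strictly increasing times $t^s_0<t^s_1<\cdots$, and $\mathbf{y}^s_q$ denotes the numerical value of $\mathbf{y}^s$ at time $t^s_q$. Let $\tilde t_0<\tilde t_1<\cdots$ be the increasing enumeration of the union of all evaluation times of all sets, $\Delta\tilde t_n=\tilde t_{n+1}-\tilde t_n$. For each $s$ and $n$ let $m^s(n)$ be the index with $t^s_{m^s(n)}\le\tilde t_n<t^s_{m^s(n)+1}$, and for each $s,m$ let $n^s(m)$ be defined by $\tilde t_{n^s(m)}=t^s_m$. Lagrange polynomials: $\ell_j(t;\tau_0,\ldots,\tau_{k-1})=\prod_{i\ne j}\frac{t-\tau_i}{\tau_j-\tau_i}$. Adams–Bashforth coefficients for the merged sequence: $\tilde\alpha_{ni}=\frac{1}{\Delta\tilde t_n}\int_{\tilde t_n}^{\tilde t_{n+1}}\ell_i(t;\tilde t_n,\tilde t_{n-1},\ldots,\tilde t_{n-(k-1)})\,dt$. The scheme defines, for each $n$ (large enough that all indices below exist), $\Delta\tilde{\mathbf{y}}_n=\sum_{q^1=m^1(n)-(k-1)}^{m^1(n)}\cdots\sum_{q^S=m^S(n)-(k-1)}^{m^S(n)}\beta_{n;q^1\cdots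 q^S}\,\mathbf{D}(\mathbf{y}^1_{q^1},\ldots,\mathbf{y}^S_{q^S})$, with $\beta_{n;q^1\cdots q^S}=\Delta\tilde t_n\sum_{i=0}^{k-1}\tilde\alpha_{ni}\prod_{s=1}^S\ell_{m^s(n)-q^s}\big(\tilde t_{n-i};t^s_{m^s(n)},\ldots,t^s_{m^s(n)-(k-1)}\big)$, and the update of set $s$ from $t^s_m$ to $t^s_{m+1}$ is $\mathbf{y}^s_{m+1}=\mathbf{y}^s_m+\sum_{n=n^s(m)}^{n^s(m+1)-1}(\Delta\tilde{\mathbf{y}}_n)^s$, where $(\cdot)^s$ denotes the components belonging to set $s$. *)

(* Defs.v *)
From HB Require Import structures.
From mathcomp Require Import all_boot all_order all_algebra.
From mathcomp Require Import all_classical all_reals all_analysis.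
Set Implicit Arguments. Unset Strict Implicit. Unset Printing Implicit Defensive.
Import Order.TTheory GRing.Theory Num.Theory.
Import numFieldNormedType.Exports.
Local Open Scope classical_set_scope.
Local Open Scope ring_scope.

Definition lagr (R : realType) (k : nat) (tau : nat -> R) (j : nat) (t : R) : R :=
  \prod_(a < k | (a : nat) != j) ((t - tau a) / (tau j - tau a)).

Definition dotv (R : realType) (N : nat) (u v : 'I_N -> R) : R :=
  \sum_(i < N) u i * v i.

Definition ab_alpha (R : realType) (k : nat) (tt : nat -> R) (n i : nat) : R :=
  (tt n.+1 - tt n)^-1 *
  (\int[lebesgue_measure]_(t in `[tt n, tt n.+1]) lagr k (fun a => tt (n - a)%N) i t).

(* beta_{n; q^1 ... q^S}, where q^s = m^s(n) - j s, j s ranging over 0..k-1.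
   Note l_{m^s(n) - q^s} = l_{j s}, nodes tau_a = t^s_{m^s(n) - a}. *)
Definition lts_beta (R : realType) (S k : nat) (ts : 'I_S -> nat -> R)
    (tt : nat -> R) (ms : 'I_S -> nat -> nat) (n : nat)
    (j : {ffun 'I_S -> 'I_k}) : R :=
  (tt n.+1 - tt n) *
  \sum_(i < k) ab_alpha k tt n i *
     \prod_(s : 'I_S) lagr k (fun a => ts s (ms s n - a)%N) (j s) (tt (n - i)%N).

(* Delta y~_n, a vector of R^N.  Component l of the state argument of D is
   taken from the set part l, at its index q^(part l) = m^(part l)(n) - j (part l). *)
Definition lts_dy (R : realType) (N S k : nat) (part : 'I_N -> 'I_S)
    (D : ('I_N -> R) -> ('I_N -> R)) (ts : 'I_S -> nat -> R) (tt : nat -> R)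
    (ms : 'I_S -> nat -> nat) (Y : 'I_S -> nat -> ('I_N -> R)) (n : nat)
    : 'I_N -> R :=
  fun i => \sum_(j : {ffun 'I_S -> 'I_k})
     lts_beta ts tt ms n j *
     D (fun l => Y (part l) (ms (part l) n - j (part l))%N l) i.

(* Main.v *)
Require Import Defs.
From HB Require Import structures.
From mathcomp Require Import all_boot all_order all_algebra.
From mathcomp Require Import all_classical all_reals all_analysis.
Import Order.TTheory GRing.Theory Num.Theory.
Local Open Scope ring_scope.

Lemma incr_lt (R : realType) (f : nat -> R) : (forall n, f n < f n.+1) ->
  forall a b, (a < b)%N -> f a < f b.
Proof.
move=> H a b ab; apply: (homo_ltn (r := fun x y => x < y)) => //.
by move=> y x z; apply: lt_trans.
Qed.

Lemma incr_ltW (R : realType) (f : nat -> R) : (forall n, f n < f n.+1) ->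
  forall a b, f a < f b -> (a < b)%N.
Proof.
move=> H a b fab; case: (ltnP a b) => // ba.
move: ba; rewrite leq_eqVlt => /orP [/eqP E|ba].
  by move: fab; rewrite E ltxx.
by have := @incr_lt _ f H _ _ ba; rewrite ltNge (ltW fab).
Qed.

Lemma incr_inj (R : realType) (f : nat -> R) : (forall n, f n < f n.+1) ->
  forall a b, f a = f b -> a = b.
Proof.
move=> H a b E; case: (ltngtP a b) => // ab.
  by have := @incr_lt _ f H _ _ ab; rewrite E ltxx.
by have := @incr_lt _ f H _ _ ab; rewrite E ltxx.
Qed.

Theorem mainTheorem1 (R : realType) (N S k : nat) (part : 'I_N -> 'I_S)
    (D : ('I_N -> R) -> ('I_N -> R)) (ts : 'I_S -> nat -> R) (tt : nat -> R)
    (ms : 'I_S -> nat -> nat) (ns : 'I_S -> nat -> nat)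
    (Y : 'I_S -> nat -> ('I_N -> R)) (c : 'I_N -> R) :
  (0 < k)%N ->
  (* evaluation times of each set are strictly increasing *)
  (forall s m, ts s m < ts s m.+1) ->
  (* tt is the increasing enumeration of the union of all evaluation times *)
  (forall n, tt n < tt n.+1) ->
  (forall n, exists s m, tt n = ts s m) ->
  (forall s m, exists n, tt n = ts s m) ->
  (* m^s(n) *)
  (forall s n, ts s 0%N <= tt n -> ts s (ms s n) <= tt n < ts s (ms s n).+1) ->
  (* n^s(m) *)
  (forall s m, tt (ns s m) = ts s m) ->
  (* linear conserved quantity *)
  (forall y, dotv c (D y) = 0) ->
  (forall n, dotv c (lts_dy k part D ts tt ms Y n) = 0) /\
  (forall (n1 n2 : nat) (p r : 'I_S -> nat), (n1 < n2)%N ->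
     (forall s, tt n1 = ts s (p s) /\ tt n2 = ts s (r s)) ->
     (* the scheme's update of every set between these synchronization times *)
     (forall s m i, (p s <= m < r s)%N -> part i = s ->
        Y s m.+1 i = Y s m i +
          \sum_(ns s m <= n < ns s m.+1) lts_dy k part D ts tt ms Y n i) ->
     \sum_(s : 'I_S) \sum_(i < N | part i == s) c i * Y s (r s) i =
     \sum_(s : 'I_S) \sum_(i < N | part i == s) c i * Y s (p s) i).
Proof.
move=> _ Hts Htt _ _ _ Hns Hc.
have P1 : forall n, dotv c (lts_dy k part D ts tt ms Y n) = 0.
  move=> n; rewrite /dotv /lts_dy.
  under eq_bigr => i _ do rewrite mulr_sumr.
  rewrite exchange_big /= big1 // => j _.
  under eq_bigr => i _ do rewrite mulrCA.
  by rewrite -mulr_sumr -/(dotv _ _) Hc mulr0.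
split => // n1 n2 p r n12 Hpr Hup.
set dy := lts_dy k part D ts tt ms Y.
have nsmono : forall s m, (ns s m <= ns s m.+1)%N.
  move=> s m; apply: ltnW; apply: (@incr_ltW _ _ Htt); rewrite !Hns; exact: Hts.
have nsmonoW : forall s m m', (m <= m')%N -> (ns s m <= ns s m')%N.
  move=> s m m'; elim: m' => [|m' IH]; first by rewrite leqn0 => /eqP ->.
  rewrite leq_eqVlt => /orP [/eqP ->//|]; rewrite ltnS => /IH H.
  exact: leq_trans H (nsmono _ _).
have Hp : forall s, ns s (p s) = n1.
  by move=> s; apply: (@incr_inj _ _ Htt); rewrite Hns (Hpr s).1.
have Hr : forall s, ns s (r s) = n2.
  by move=> s; apply: (@incr_inj _ _ Htt); rewrite Hns (Hpr s).2.
have Hpr' : forall s, (p s <= r s)%N.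
  move=> s; apply: ltnW; apply: (@incr_ltW _ _ (Hts s)).
  by rewrite -(Hpr s).1 -(Hpr s).2; exact: (@incr_lt _ _ Htt _ _ n12).
have key : forall s i, part i = s -> forall d, (p s + d <= r s)%N ->
   Y s (p s + d)%N i = Y s (p s) i + \sum_(n1 <= n < ns s (p s + d)%N) dy n i.
  move=> s i Hi; elim => [|d IH] Hd.
    by rewrite addn0 Hp big_geq // addr0.
  rewrite addnS Hup; last 2 first.
  - by rewrite leq_addr /= -addnS.
  - by [].
  rewrite IH; last by apply: ltnW; rewrite -addnS.
  rewrite -addrA; congr (_ + _).
  rewrite [in RHS](big_cat_nat _ (n := ns s (p s + d)%N)) //.
  by rewrite -(Hp s); apply: nsmonoW; rewrite leq_addr.
have key2 : forall s i, part i = s ->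
   Y s (r s) i = Y s (p s) i + \sum_(n1 <= n < n2) dy n i.
  move=> s i Hi; have := key s i Hi (r s - p s)%N.
  by rewrite subnKC ?Hpr' // Hr => ->.
transitivity (\sum_(s : 'I_S) \sum_(i < N | part i == s)
   (c i * Y s (p s) i + c i * \sum_(n1 <= n < n2) dy n i)).
  apply: eq_bigr => s _; apply: eq_bigr => i /eqP Hi.
  by rewrite key2 // mulrDr.
rewrite -[RHS]addr0.
under eq_bigr => s _ do rewrite big_split /=.
rewrite big_split /=; congr (_ + _).
transitivity (\sum_(i < N) c i * \sum_(n1 <= n < n2) dy n i).
  rewrite [RHS](partition_big part xpredT) //=.
under eq_bigr => i _ do rewrite mulr_sumr.
rewrite exchange_big /= big1 // => n _.
exact: P1.
Qed.
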